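(* Let $V>0$, $r_d>0$, $k>\frac{1}{r_d}$ and $r_a=\sqrt{r_d^2-\frac{1}{k^2}}$. Consider the closed-loop system (on the region $r\ge r_a$) $$\dot r=-V\cos\theta,\qquad \dot\theta=k\left[V\cos\!\left(\pi-\sin^{-1}\!\left(\tfrac{r_a}{r}\right)\right)+V\cos\theta\right]+\frac{V\sin\theta}{r}.$$ Then $(r,\theta)=(r_d,\frac{\pi}{2})$ is a locally exponentially stable equilibrium of this system.
   Context: This system is the polar form ($r$ = distance from UAV to target, $\theta$ = bearing angle, i.e., the counterclockwise angle from the UAV-to-target vector to the heading) of unicycle dynamics $\dot x=V\cos\psi,\ \dot y=V\sin\psi,\ \dot\psi=\omega$ under the control $\omega=k[V\cos(\pi-\sin^{-1}(r_a/r))-\dot r]$ for $r\ge r_a$ (and $\omega=0$ for $r<r_a$), with $\dot r=-V\cos\theta$ substituted. $\sin^{-1}$ is the principal arcsine. *)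

(* Defs.v *)
From Stdlib Require Import Reals.
From Coquelicot Require Import Coquelicot.
Open Scope R_scope.

Definition r_a (rd k : R) : R := sqrt (rd ^ 2 - 1 / k ^ 2).

(* Closed-loop vector field in polar form.
   rdot = - V cos theta
   thetadot = omega + V sin theta / r, with
   omega = k [V cos(pi - asin(ra/r)) - rdot]  if r >= ra,  0 otherwise. *)
Definition omega (V k ra r th : R) : R :=
  if Rle_dec ra r then k * (V * cos (PI - asin (ra / r)) + V * cos th) else 0.

Definition f_r (V : R) (r th : R) : R := - V * cos th.
Definition f_th (V k ra : R) (r th : R) : R :=
  omega V k ra r th + V * sin th / r.

Definition is_solution (V k ra : R) (T : Rbar) (r th : R -> R) : Prop :=
  (forall t, 0 < t -> Rbar_lt t T ->
     is_derive r t (f_r V (r t) (th t)) /\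
     is_derive th t (f_th V k ra (r t) (th t))) /\
  filterlim r (at_right 0) (locally (r 0)) /\
  filterlim th (at_right 0) (locally (th 0)).

Definition dist2 (r1 th1 r2 th2 : R) : R :=
  sqrt ((r1 - r2) ^ 2 + (th1 - th2) ^ 2).

Definition locally_exp_stable (V k ra re the : R) : Prop :=
  f_r V re the = 0 /\ f_th V k ra re the = 0 /\
  exists delta c lambda, 0 < delta /\ 0 < c /\ 0 < lambda /\
    forall r0 th0, dist2 r0 th0 re the < delta ->
      (exists r th, is_solution V k ra p_infty r th /\ r 0 = r0 /\ th 0 = th0) /\
      (forall (T : Rbar) r th, is_solution V k ra T r th ->
         r 0 = r0 -> th 0 = th0 ->
         forall t, 0 <= t -> Rbar_lt t T ->
           dist2 (r t) (th t) re the <= c * dist2 r0 th0 re the * exp (- lambda * t)).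

(* Main.v *)
Require Import Defs.
From Stdlib Require Import Reals Lra Lia.
From Coquelicot Require Import Coquelicot.
Open Scope R_scope.


Lemma cont_eps (f : R -> R) x : continuous f x ->
  forall e, 0 < e -> exists d, 0 < d /\ forall y, Rabs (y - x) < d -> Rabs (f y - f x) < e.
Proof.
  intros H e He.
  destruct (proj1 (filterlim_locally f (f x)) H (mkposreal e He)) as [d Hd].
  exists d; split; [apply cond_pos|]. intros y Hy. apply (Hd y Hy).
Qed.

Lemma eps_cont (f : R -> R) x :
  (forall e, 0 < e -> exists d, 0 < d /\ forall y, Rabs (y - x) < d -> Rabs (f y - f x) < e) ->
  continuous f x.
Proof.
  intros H. apply filterlim_locally. intros eps.
  destruct (H eps (cond_pos eps)) as [d [Hd H']].
  exists (mkposreal d Hd). intros y Hy. apply (H' y Hy).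
Qed.

Lemma lip_cont (h : R -> R) K : 0 <= K ->
  (forall t s, Rabs (h t - h s) <= K * Rabs (t - s)) -> forall t, continuous h t.
Proof.
  intros HK H t. apply eps_cont. intros e He.
  exists (e / (K + 1)). split. apply Rdiv_lt_0_compat; lra.
  intros y Hy. eapply Rle_lt_trans. apply H.
  apply Rle_lt_trans with (K * (e / (K+1))).
  apply Rmult_le_compat_l; lra.
  apply Rlt_le_trans with ((K+1) * (e/(K+1))).
  apply Rmult_lt_compat_r. apply Rdiv_lt_0_compat; lra. lra.
  right; field; lra.
Qed.

Lemma geo_small a K : (forall n, a <= K * (/2)^n) -> a <= 0.
Proof.
  intros H. destruct (Rle_dec a 0) as [h|h]; auto. exfalso.
  assert (HK : 0 < K). { specialize (H O). simpl in H. lra. }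
  destruct (pow_lt_1_zero (/2)) with (y := a / K) as [N HN].
  rewrite Rabs_pos_eq; lra. apply Rdiv_lt_0_compat; lra.
  specialize (HN N (le_n N)). specialize (H N).
  rewrite Rabs_pos_eq in HN by (apply pow_le; lra).
  apply (Rmult_lt_compat_l K) in HN; auto.
  replace (K * (a / K)) with a in HN by (field; lra). lra.
Qed.

Lemma RInt_lip (g : R -> R) B : (forall a b, ex_RInt g a b) -> (forall u, Rabs (g u) <= B) ->
  forall t s, Rabs (RInt g 0 t - RInt g 0 s) <= B * Rabs (t - s).
Proof.
  intros Hex HB t s.
  assert (E : RInt g 0 t = RInt g 0 s + RInt g s t).
  { symmetry. exact (RInt_Chasles g 0 s t (Hex _ _) (Hex _ _)). }
  rewrite E. assert (Hr : forall a c : R, a + c - a = c) by (intros; ring). rewrite Hr.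
  destruct (Rle_dec s t).
  - rewrite Rabs_pos_eq with (x := t - s) by lra. rewrite Rmult_comm.
    apply abs_RInt_le_const; auto.
  - rewrite <- opp_RInt_swap by auto. change (Rabs (- RInt g t s) <= B * Rabs (t - s)). rewrite Rabs_Ropp.
    rewrite Rabs_left with (r := t - s) by lra. replace (- (t - s)) with (s - t) by ring.
    rewrite Rmult_comm. apply abs_RInt_le_const; auto; lra.
Qed.

Lemma geo_lim (u : nat -> R) C : 0 <= C -> (forall n p, Rabs (u (n+p)%nat - u n) <= C * (/2)^n) ->
  forall n, Rabs (Lim_seq u - u n) <= C * (/2)^n.
Proof.
  intros HC H.
  assert (Hc : ex_lim_seq_cauchy u).
  { intros eps. destruct (pow_lt_1_zero (/2)) with (y := eps / (2 * C + 1)) as [N HN].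
    rewrite Rabs_pos_eq; lra. apply Rdiv_lt_0_compat; [apply cond_pos|lra].
    exists N. intros n m Hn Hm.
    assert (h1 := H N (n - N)%nat). assert (h2 := H N (m - N)%nat).
    replace (N + (n - N))%nat with n in h1 by lia. replace (N + (m - N))%nat with m in h2 by lia.
    specialize (HN N (le_n N)). rewrite Rabs_pos_eq in HN by (apply pow_le; lra).
    assert (0 < eps) by apply cond_pos.
    assert (HN' : (2*C+1) * (/2)^N < eps).
    { apply Rmult_lt_compat_l with (r := 2*C+1) in HN; [|lra].
      replace ((2*C+1) * (eps / (2*C+1))) with (pos eps) in HN by (field; lra). lra. }
    assert (0 <= (/2)^N) by (apply pow_le; lra).
    replace (u n - u m) with ((u n - u N) - (u m - u N)) by ring.
    eapply Rle_lt_trans. apply Rabs_triang. rewrite Rabs_Ropp. nra. }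
  apply ex_lim_seq_cauchy_corr in Hc.
  assert (Hl := Lim_seq_correct' u Hc). apply is_lim_seq_Reals in Hl.
  intros n. destruct (Rle_dec (Rabs (Lim_seq u - u n)) (C * (/2)^n)) as [h|h]; auto.
  exfalso. destruct (Hl (Rabs (Lim_seq u - u n) - C * (/2)^n)) as [M HM]. lra.
  specialize (HM (n + M)%nat ltac:(lia)). specialize (H n M). unfold R_dist in HM.
  assert (Rabs (Lim_seq u - u n) <= Rabs (u (n+M)%nat - Lim_seq u) + Rabs (u (n + M)%nat - u n)).
  { replace (Lim_seq u - u n) with (- (u (n+M)%nat - Lim_seq u) + (u (n + M)%nat - u n)) by ring.
    eapply Rle_trans. apply Rabs_triang. rewrite Rabs_Ropp. lra. }
  lra.
Qed.


Section Picard.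
Variables (F1 F2 : R -> R -> R) (B L x0 y0 : R).
Hypothesis hB : 0 < B.
Hypothesis hL : 0 < L.
Hypothesis HB1 : forall a b, Rabs (F1 a b) <= B.
Hypothesis HB2 : forall a b, Rabs (F2 a b) <= B.
Hypothesis HL : forall a b a' b',
  Rabs (F1 a b - F1 a' b') + Rabs (F2 a b - F2 a' b') <= L * (Rabs (a - a') + Rabs (b - b')).

Lemma HL1 a b a' b' : Rabs (F1 a b - F1 a' b') <= L * (Rabs (a - a') + Rabs (b - b')).
Proof. generalize (HL a b a' b') (Rabs_pos (F2 a b - F2 a' b')); lra. Qed.
Lemma HL2 a b a' b' : Rabs (F2 a b - F2 a' b') <= L * (Rabs (a - a') + Rabs (b - b')).
Proof. generalize (HL a b a' b') (Rabs_pos (F1 a b - F1 a' b')); lra. Qed.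

Fixpoint pic (n : nat) : (R -> R) * (R -> R) :=
  match n with
  | O => (fun _ => x0, fun _ => y0)
  | S m => (fun t => x0 + RInt (fun s => F1 (fst (pic m) s) (snd (pic m) s)) 0 t,
            fun t => y0 + RInt (fun s => F2 (fst (pic m) s) (snd (pic m) s)) 0 t)
  end.

Definition PX n := fst (pic n).
Definition PY n := snd (pic n).

Lemma comp_lip (F : R -> R -> R) (X Y : R -> R) K :
  (forall a b a' b', Rabs (F a b - F a' b') <= L * (Rabs (a - a') + Rabs (b - b'))) ->
  0 <= K ->
  (forall t s, Rabs (X t - X s) <= K * Rabs (t - s)) ->
  (forall t s, Rabs (Y t - Y s) <= K * Rabs (t - s)) ->
  forall t, continuous (fun s => F (X s) (Y s)) t.
Proof.
  intros HF HK HX HY. apply lip_cont with (K := L * (2 * K)).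
  apply Rmult_le_pos; lra.
  intros t s. eapply Rle_trans. apply HF.
  replace (L * (2 * K) * Rabs (t - s)) with (L * (K * Rabs (t - s) + K * Rabs (t - s))) by ring.
  apply Rmult_le_compat_l. lra. apply Rplus_le_compat; auto.
Qed.

Lemma pic_lip n : (forall t s, Rabs (PX n t - PX n s) <= B * Rabs (t - s)) /\
                  (forall t s, Rabs (PY n t - PY n s) <= B * Rabs (t - s)).
Proof.
  induction n as [|n [IHX IHY]].
  - split; intros t s; unfold PX, PY; simpl;
      replace (_ - _) with 0 by ring; rewrite Rabs_R0;
      apply Rmult_le_pos; [lra | apply Rabs_pos | lra | apply Rabs_pos].
  - assert (C1 := comp_lip F1 (PX n) (PY n) B HL1 (Rlt_le _ _ hB) IHX IHY).
    assert (C2 := comp_lip F2 (PX n) (PY n) B HL2 (Rlt_le _ _ hB) IHX IHY).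
    split; intros t s; unfold PX, PY; simpl;
    match goal with |- Rabs (?c + RInt ?g 0 t - (?c + RInt ?g 0 s)) <= _ =>
      replace (c + RInt g 0 t - (c + RInt g 0 s)) with (RInt g 0 t - RInt g 0 s) by ring;
      apply RInt_lip; [intros; apply (ex_RInt_continuous (V:=R_CompleteNormedModule)); intros; auto | intros; auto] end.
Qed.

Lemma pic_cont1 n t : continuous (fun s => F1 (PX n s) (PY n s)) t.
Proof. destruct (pic_lip n). apply comp_lip with B; auto using HL1; lra. Qed.
Lemma pic_cont2 n t : continuous (fun s => F2 (PX n s) (PY n s)) t.
Proof. destruct (pic_lip n). apply comp_lip with B; auto using HL2; lra. Qed.


Lemma Rpm (a c : R) : a + c - a = c.
Proof. ring. Qed.

Lemma cont_abs_minus (f g : R -> R) t : continuous f t -> continuous g t -> continuous (fun s => Rabs (f s - g s)) t.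
Proof. intros. apply continuous_Rabs_comp. exact (continuous_minus f g t H H0). Qed.
Lemma cont_plus' (f g : R -> R) t : continuous f t -> continuous g t -> continuous (fun s => f s + g s) t.
Proof. intros. exact (continuous_plus f g t H H0). Qed.
Lemma cont_scal' (c : R) (f : R -> R) t : continuous f t -> continuous (fun s => c * f s) t.
Proof. intros. exact (continuous_scal_r c f t H). Qed.
Lemma exR (f : R -> R) : (forall t, continuous f t) -> forall a b, ex_RInt f a b.
Proof. intros. apply (ex_RInt_continuous (V:=R_CompleteNormedModule)); auto. Qed.

Lemma RInt_exp (c K t : R) : 0 < K -> RInt (fun s => c * exp (K*s)) 0 t = c * (exp (K*t) - 1) / K.
Proof.
  intros HK.
  apply is_RInt_unique.
  assert (H := is_RInt_derive (V:=R_CompleteNormedModule) (fun s => c * exp (K*s) / K) (fun s => c * exp (K*s)) 0 t).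
  replace (c * (exp (K*t) - 1) / K) with (minus (c * exp (K*t) / K) (c * exp (K*0) / K)).
  apply H.
  - intros x _. auto_derive. auto. field. lra.
  - intros x _. apply (ex_derive_continuous (fun s => c * exp (K*s))). auto_derive. auto.
  - change (c*exp(K*t)/K - c*exp(K*0)/K = c*(exp(K*t)-1)/K). rewrite Rmult_0_r, exp_0. field. lra.
Qed.

Definition Dn n t := Rabs (PX (S n) t - PX n t) + Rabs (PY (S n) t - PY n t).

Lemma Dn_cont n t : continuous (Dn n) t.
Proof.
  destruct (pic_lip n) as [A1 A2]. destruct (pic_lip (S n)) as [A3 A4].
  unfold Dn. apply cont_plus'; apply cont_abs_minus; apply lip_cont with B; auto; lra.
Qed.

Lemma Dn_bound n t : 0 <= t -> Dn n t <= (B/L) * (/2)^n * exp (2*L*t).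
Proof.
  revert t. induction n as [|n IH]; intros t Ht.
  - unfold Dn, PX, PY; simpl.
    rewrite !Rpm.
    assert (E1 : Rabs (RInt (fun _ : R => F1 x0 y0) 0 t) <= (t - 0) * B).
    { apply abs_RInt_le_const; auto. apply ex_RInt_const. }
    assert (E2 : Rabs (RInt (fun _ : R => F2 x0 y0) 0 t) <= (t - 0) * B).
    { apply abs_RInt_le_const; auto. apply ex_RInt_const. }
    assert (E3 := exp_ineq1_le (2*L*t)).
    apply Rle_trans with (2 * B * t). lra.
    rewrite Rmult_1_r.
    apply Rle_trans with (B / L * (1 + 2 * L * t)).
    replace (B / L * (1 + 2 * L * t)) with (B/L + 2 * B * t) by (field; lra).
    assert (0 < B / L) by (apply Rdiv_lt_0_compat; lra). lra.
    apply Rmult_le_compat_l; auto. apply Rlt_le, Rdiv_lt_0_compat; lra.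
  - set (g1 := fun m s => F1 (PX m s) (PY m s)).
    set (g2 := fun m s => F2 (PX m s) (PY m s)).
    assert (Eg1 : forall m a b, ex_RInt (g1 m) a b) by (intros; apply exR; intros; apply pic_cont1).
    assert (Eg2 : forall m a b, ex_RInt (g2 m) a b) by (intros; apply exR; intros; apply pic_cont2).
    assert (EX : PX (S (S n)) t - PX (S n) t = RInt (fun s => g1 (S n) s - g1 n s) 0 t).
    { unfold PX at 1 2. simpl. rewrite (RInt_minus (V:=R_CompleteNormedModule) (g1 (S n)) (g1 n)) by auto.
      unfold g1, PX, PY, minus, plus, opp; simpl. ring. }
    assert (EY : PY (S (S n)) t - PY (S n) t = RInt (fun s => g2 (S n) s - g2 n s) 0 t).
    { unfold PY at 1 2. simpl. rewrite (RInt_minus (V:=R_CompleteNormedModule) (g2 (S n)) (g2 n)) by auto.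
      unfold g2, PX, PY, minus, plus, opp; simpl. ring. }
    unfold Dn at 1. rewrite EX, EY.
    assert (Ec1 : forall a b, ex_RInt (fun s => g1 (S n) s - g1 n s) a b).
    { intros; apply exR; intros. exact (continuous_minus _ _ _ (pic_cont1 (S n) t0) (pic_cont1 n t0)). }
    assert (Ec2 : forall a b, ex_RInt (fun s => g2 (S n) s - g2 n s) a b).
    { intros; apply exR; intros. exact (continuous_minus _ _ _ (pic_cont2 (S n) t0) (pic_cont2 n t0)). }
    assert (Ea1 : forall a b, ex_RInt (fun s => Rabs (g1 (S n) s - g1 n s)) a b).
    { intros; apply exR; intros. apply cont_abs_minus; apply pic_cont1. }
    assert (Ea2 : forall a b, ex_RInt (fun s => Rabs (g2 (S n) s - g2 n s)) a b).
    { intros; apply exR; intros. apply cont_abs_minus; apply pic_cont2. }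
    eapply Rle_trans. apply Rplus_le_compat; apply abs_RInt_le; auto.
    assert (Esum : RInt (fun s => Rabs (g1 (S n) s - g1 n s)) 0 t + RInt (fun s => Rabs (g2 (S n) s - g2 n s)) 0 t
       = RInt (fun s => Rabs (g1 (S n) s - g1 n s) + Rabs (g2 (S n) s - g2 n s)) 0 t).
    { symmetry. exact (RInt_plus (V:=R_CompleteNormedModule) _ _ 0 t (Ea1 0 t) (Ea2 0 t)). }
    cbv beta. rewrite Esum.
    apply Rle_trans with (RInt (fun s => L * Dn n s) 0 t).
    { apply RInt_le. exact Ht.
      apply exR; intros; apply cont_plus'; apply cont_abs_minus; unfold g1, g2; auto using pic_cont1, pic_cont2.
      apply exR; intros; apply cont_scal'; apply Dn_cont.
      intros x _. unfold g1, g2, Dn. apply HL. }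
    apply Rle_trans with (RInt (fun s => (B * (/2)^n) * exp (2*L*s)) 0 t).
    { apply RInt_le. exact Ht.
      apply exR; intros; apply cont_scal'; apply Dn_cont.
      apply exR; intros. apply cont_scal'. apply (ex_derive_continuous (fun s => exp (2*L*s))). auto_derive. auto.
      intros x Hx. replace (B * (/2)^n * exp (2*L*x)) with (L * ((B/L) * (/2)^n * exp (2*L*x))) by (field; lra).
      apply Rmult_le_compat_l. lra. apply IH. lra. }
    rewrite RInt_exp by lra.
    simpl. assert (0 < exp (2*L*t)) by apply exp_pos. assert (0 < (/2)^n) by (apply pow_lt; lra).
    replace (B * (/ 2) ^ n * (exp (2 * L * t) - 1) / (2 * L)) with
      (B / L * (/2 * (/2)^n) * exp (2 * L * t) - B * (/2)^n / (2*L)) by (field; lra).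
    assert (0 < B * (/2)^n / (2*L)). { apply Rdiv_lt_0_compat; [apply Rmult_lt_0_compat|]; lra. }
    lra.
Qed.

Lemma diff_bound n p t : 0 <= t ->
  Rabs (PX (n+p) t - PX n t) + Rabs (PY (n+p) t - PY n t) <= 2*(B/L)*exp(2*L*t) * ((/2)^n - (/2)^(n+p)).
Proof.
  intros Ht. induction p as [|p IH].
  - rewrite Nat.add_0_r. unfold Rminus. rewrite !Rplus_opp_r, Rabs_R0. lra.
  - replace (n + S p)%nat with (S (n + p)) by lia.
    assert (HD := Dn_bound (n+p) t Ht). unfold Dn in HD.
    assert (T1 : Rabs (PX (S (n+p)) t - PX n t) <= Rabs (PX (S (n+p)) t - PX (n+p) t) + Rabs (PX (n+p) t - PX n t)).
    { replace (PX (S (n+p)) t - PX n t) with ((PX (S (n+p)) t - PX (n+p) t) + (PX (n+p) t - PX n t)) by ring. apply Rabs_triang. }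
    assert (T2 : Rabs (PY (S (n+p)) t - PY n t) <= Rabs (PY (S (n+p)) t - PY (n+p) t) + Rabs (PY (n+p) t - PY n t)).
    { replace (PY (S (n+p)) t - PY n t) with ((PY (S (n+p)) t - PY (n+p) t) + (PY (n+p) t - PY n t)) by ring. apply Rabs_triang. }
    simpl pow at 2. assert (0 < exp (2*L*t)) by apply exp_pos.
    assert (0 < B/L) by (apply Rdiv_lt_0_compat; lra).
    assert (E : 2 * (B / L) * exp (2 * L * t) * ((/ 2) ^ n - / 2 * (/ 2) ^ (n + p)) =
      2 * (B / L) * exp (2 * L * t) * ((/ 2) ^ n - (/ 2) ^ (n + p)) + B / L * (/ 2) ^ (n + p) * exp (2 * L * t)) by (field; lra).
    rewrite E. lra.
Qed.

Definition Xl t : R := real (Lim_seq (fun n => PX n (Rmax 0 t))).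
Definition Yl t : R := real (Lim_seq (fun n => PY n (Rmax 0 t))).
Definition Kc t := 2*(B/L)*exp(2*L*t).

Lemma Kc_pos t : 0 < Kc t.
Proof. unfold Kc. assert (0 < exp (2*L*t)) by apply exp_pos.
  assert (0 < B/L) by (apply Rdiv_lt_0_compat; lra). nra. Qed.

Lemma Kc_mono s t : s <= t -> Kc s <= Kc t.
Proof. intros. unfold Kc. apply Rmult_le_compat_l. assert (0 < B/L) by (apply Rdiv_lt_0_compat; lra). lra.
  destruct (Req_dec s t). subst; lra. apply Rlt_le, exp_increasing. nra. Qed.

Lemma Xl_bound t n : Rabs (Xl t - PX n (Rmax 0 t)) <= Kc (Rmax 0 t) * (/2)^n.
Proof.
  unfold Xl. apply (geo_lim (fun m => PX m (Rmax 0 t))). apply Rlt_le, Kc_pos.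
  intros m p. assert (Ht : 0 <= Rmax 0 t) by apply Rmax_l.
  assert (H := diff_bound m p _ Ht). assert (0 < (/2)^(m+p)) by (apply pow_lt; lra).
  assert (0 <= Rabs (PY (m + p) (Rmax 0 t) - PY m (Rmax 0 t))) by apply Rabs_pos.
  assert (0 < Kc (Rmax 0 t)) by apply Kc_pos. unfold Kc in *. nra.
Qed.

Lemma Yl_bound t n : Rabs (Yl t - PY n (Rmax 0 t)) <= Kc (Rmax 0 t) * (/2)^n.
Proof.
  unfold Yl. apply (geo_lim (fun m => PY m (Rmax 0 t))). apply Rlt_le, Kc_pos.
  intros m p. assert (Ht : 0 <= Rmax 0 t) by apply Rmax_l.
  assert (H := diff_bound m p _ Ht). assert (0 < (/2)^(m+p)) by (apply pow_lt; lra).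
  assert (0 <= Rabs (PX (m + p) (Rmax 0 t) - PX m (Rmax 0 t))) by apply Rabs_pos.
  assert (0 < Kc (Rmax 0 t)) by apply Kc_pos. unfold Kc in *. nra.
Qed.

Lemma Rmax_lip t s : Rabs (Rmax 0 t - Rmax 0 s) <= Rabs (t - s).
Proof. unfold Rmax. destruct (Rle_dec 0 t), (Rle_dec 0 s); unfold Rabs;
  repeat destruct Rcase_abs; lra. Qed.

Lemma tri3 a b c : Rabs (a + b - c) <= Rabs a + Rabs b + Rabs c.
Proof. unfold Rabs; repeat destruct Rcase_abs; lra. Qed.

Lemma lim_lip (Z : R -> R) (P : nat -> R -> R) :
  (forall n t s, Rabs (P n t - P n s) <= B * Rabs (t - s)) ->
  (forall t n, Rabs (Z t - P n (Rmax 0 t)) <= Kc (Rmax 0 t) * (/2)^n) ->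
  forall t s, Rabs (Z t - Z s) <= B * Rabs (t - s).
Proof.
  intros HP HZ t s.
  assert (H : Rabs (Z t - Z s) - B * Rabs (t - s) <= 0).
  { apply geo_small with (K := Kc (Rmax 0 t) + Kc (Rmax 0 s)). intros n.
    assert (h1 := HZ t n). assert (h2 := HZ s n). assert (h3 := HP n (Rmax 0 t) (Rmax 0 s)).
    assert (h4 := Rmax_lip t s).
    assert (h5 : Rabs (Z t - Z s) <= Rabs (Z t - P n (Rmax 0 t)) + Rabs (P n (Rmax 0 t) - P n (Rmax 0 s)) + Rabs (Z s - P n (Rmax 0 s))).
    { replace (Z t - Z s) with ((Z t - P n (Rmax 0 t)) + (P n (Rmax 0 t) - P n (Rmax 0 s)) - (Z s - P n (Rmax 0 s))) by ring.
      apply tri3. }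
    assert (B * Rabs (Rmax 0 t - Rmax 0 s) <= B * Rabs (t - s)) by (apply Rmult_le_compat_l; lra).
    lra. }
  lra.
Qed.

Lemma PX0 n : PX n 0 = x0.
Proof. destruct n; unfold PX; simpl; [reflexivity|]. rewrite RInt_point. apply Rplus_0_r. Qed.
Lemma PY0 n : PY n 0 = y0.
Proof. destruct n; unfold PY; simpl; [reflexivity|]. rewrite RInt_point. apply Rplus_0_r. Qed.

Lemma Xl0 : Xl 0 = x0.
Proof. unfold Xl. rewrite (Lim_seq_ext _ (fun _ => x0)). rewrite Lim_seq_const. reflexivity.
  intros n. rewrite Rmax_left by lra. apply PX0. Qed.
Lemma Yl0 : Yl 0 = y0.
Proof. unfold Yl. rewrite (Lim_seq_ext _ (fun _ => y0)). rewrite Lim_seq_const. reflexivity.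
  intros n. rewrite Rmax_left by lra. apply PY0. Qed.

Lemma Xl_lip : forall t s, Rabs (Xl t - Xl s) <= B * Rabs (t - s).
Proof. apply (lim_lip Xl PX). intros n; apply (proj1 (pic_lip n)). apply Xl_bound. Qed.
Lemma Yl_lip : forall t s, Rabs (Yl t - Yl s) <= B * Rabs (t - s).
Proof. apply (lim_lip Yl PY). intros n; apply (proj2 (pic_lip n)). apply Yl_bound. Qed.

Lemma G1_cont t : continuous (fun s => F1 (Xl s) (Yl s)) t.
Proof. apply comp_lip with B; auto using HL1, Xl_lip, Yl_lip; lra. Qed.
Lemma G2_cont t : continuous (fun s => F2 (Xl s) (Yl s)) t.
Proof. apply comp_lip with B; auto using HL2, Xl_lip, Yl_lip; lra. Qed.

Lemma int_eq (F : R -> R -> R) (Z : R -> R) (P : nat -> R -> R) z0 t :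
  (forall a b a' b', Rabs (F a b - F a' b') <= L * (Rabs (a - a') + Rabs (b - b'))) ->
  (forall n s, continuous (fun u => F (PX n u) (PY n u)) s) ->
  (forall s, continuous (fun u => F (Xl u) (Yl u)) s) ->
  (forall n u, P (S n) u = z0 + RInt (fun s => F (PX n s) (PY n s)) 0 u) ->
  (forall u n, Rabs (Z u - P n (Rmax 0 u)) <= Kc (Rmax 0 u) * (/2)^n) ->
  0 <= t -> Z t = z0 + RInt (fun s => F (Xl s) (Yl s)) 0 t.
Proof.
  intros HF Hc1 Hc2 HP HZ Ht.
  assert (H : Rabs (Z t - (z0 + RInt (fun s => F (Xl s) (Yl s)) 0 t)) <= 0).
  { apply geo_small with (K := Kc t + t * (L * (2 * Kc t))). intros n.
    rewrite <- Rpm with (a := z0) (c := Z t - (z0 + RInt (fun s => F (Xl s) (Yl s)) 0 t)).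
    assert (E : z0 + (Z t - (z0 + RInt (fun s : R => F (Xl s) (Yl s)) 0 t)) - z0 =
      (Z t - P (S n) t) + (RInt (fun s => F (PX n s) (PY n s) - F (Xl s) (Yl s)) 0 t)).
    { rewrite (RInt_minus (V:=R_CompleteNormedModule) (fun s => F (PX n s) (PY n s)) (fun s => F (Xl s) (Yl s))).
      rewrite HP. change (z0 + (Z t - (z0 + RInt (fun s : R => F (Xl s) (Yl s)) 0 t)) - z0 =
        Z t - (z0 + RInt (fun s : R => F (PX n s) (PY n s)) 0 t) +
        (RInt (fun s : R => F (PX n s) (PY n s)) 0 t - RInt (fun s : R => F (Xl s) (Yl s)) 0 t)). ring.
      apply exR; auto. apply exR; auto. }
    rewrite E. eapply Rle_trans. apply Rabs_triang.
    assert (h1 := HZ t (S n)). rewrite Rmax_right in h1 by lra. simpl pow in h1.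
    assert (h2 : Rabs (RInt (fun s : R => F (PX n s) (PY n s) - F (Xl s) (Yl s)) 0 t) <= (t - 0) * (L * (2 * Kc t) * (/2)^n)).
    { apply abs_RInt_le_const. lra. apply exR. intros s. exact (continuous_minus _ _ _ (Hc1 n s) (Hc2 s)).
      intros s Hs. eapply Rle_trans. apply HF.
      rewrite Rmult_assoc. apply Rmult_le_compat_l. lra.
      assert (k1 := Xl_bound s n). assert (k2 := Yl_bound s n).
      rewrite Rmax_right in k1, k2 by lra. rewrite Rabs_minus_sym in k1, k2.
      assert (Kc s <= Kc t) by (apply Kc_mono; lra). assert (0 < (/2)^n) by (apply pow_lt; lra). nra. }
    assert (0 < Kc t) by apply Kc_pos. assert (0 < (/2)^n) by (apply pow_lt; lra). nra. }
  assert (H0 := Rabs_pos (Z t - (z0 + RInt (fun s => F (Xl s) (Yl s)) 0 t))).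
  assert (Rabs (Z t - (z0 + RInt (fun s => F (Xl s) (Yl s)) 0 t)) = 0) by lra.
  apply Rabs_eq_0 in H1. lra.
Qed.

Lemma der_from_int (Z G : R -> R) z0 t : 0 < t -> (forall s, continuous G s) ->
  (forall u, 0 <= u -> Z u = z0 + RInt G 0 u) -> is_derive Z t (G t).
Proof.
  intros Ht Hc HZ.
  apply is_derive_ext_loc with (f := fun u => plus z0 (RInt G 0 u)).
  - exists (mkposreal t Ht). intros u Hu. change (Rabs (u - t) < t) in Hu.
    rewrite HZ. reflexivity. unfold Rabs in Hu; destruct Rcase_abs in Hu; lra.
  - rewrite <- (plus_zero_l (G t)). apply (is_derive_plus (fun _ : R => z0) (fun u => RInt G 0 u) t zero (G t)). apply is_derive_const.
    apply is_derive_RInt with (a := 0). exists (mkposreal 1 Rlt_0_1). intros u _.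
    apply (RInt_correct (V:=R_CompleteNormedModule)). apply exR; auto. apply Hc.
Qed.

Theorem picard_exists : exists X Y : R -> R, X 0 = x0 /\ Y 0 = y0 /\
  (forall t, continuous X t) /\ (forall t, continuous Y t) /\
  (forall t, 0 < t -> is_derive X t (F1 (X t) (Y t)) /\ is_derive Y t (F2 (X t) (Y t))).
Proof.
  exists Xl, Yl. split; [apply Xl0|]. split; [apply Yl0|].
  split. intros t; apply lip_cont with B. lra. apply Xl_lip.
  split. intros t; apply lip_cont with B. lra. apply Yl_lip.
  intros t Ht. split.
  - apply (der_from_int Xl (fun s => F1 (Xl s) (Yl s)) x0); auto using G1_cont.
    intros u Hu. apply (int_eq F1 Xl PX x0 u HL1 pic_cont1 G1_cont); auto using Xl_bound.
  - apply (der_from_int Yl (fun s => F2 (Xl s) (Yl s)) y0); auto using G2_cont.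
    intros u Hu. apply (int_eq F2 Yl PY y0 u HL2 pic_cont2 G2_cont); auto using Yl_bound.
Qed.
End Picard.


Lemma barrier (U : R -> R) (t1 : R) : 0 <= t1 -> U 0 <= 0 ->
  (forall t, 0 <= t <= t1 -> continuous U t) ->
  (forall t, 0 <= t < t1 -> U t <= 0 -> exists eta, 0 < eta /\
     forall s, t < s < t + eta -> s <= t1 -> ex_derive U s /\ Derive U s <= 0) ->
  U t1 <= 0.
Proof.
  intros Ht1 H0 Hc Hd.
  destruct (Rle_dec (U t1) 0) as [h|h]; auto. exfalso.
  set (Z := fun s => 0 <= s <= t1 /\ U s <= 0).
  assert (Hb : bound Z). { exists t1. intros s [Hs _]. lra. }
  assert (Hne : exists x, Z x). { exists 0. split; lra. }
  destruct (completeness Z Hb Hne) as [a [Hub Hlub]].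
  assert (Ha0 : 0 <= a). { apply Hub. split; lra. }
  assert (Ha1 : a <= t1). { apply Hlub. intros s [Hs _]. lra. }
  assert (HUa : U a <= 0).
  { destruct (Rle_dec (U a) 0) as [h'|h']; auto. exfalso.
    destruct (cont_eps U a (Hc a (conj Ha0 Ha1)) (U a)) as [d [Hd0 Hd1]]. lra.
    assert (Hub' : is_upper_bound Z (a - d)).
    { intros s [Hs Hus]. destruct (Rle_dec s (a - d)) as [q|q]; auto. exfalso.
      assert (Hsa : s <= a) by (apply Hub; split; auto).
      assert (Hsd : Rabs (s - a) < d) by (unfold Rabs; destruct Rcase_abs; lra).
      specialize (Hd1 s Hsd). unfold Rabs in Hd1; destruct Rcase_abs in Hd1; lra. }
    specialize (Hlub _ Hub'). lra. }
  assert (Hat : a < t1). { destruct (Req_dec a t1); subst; lra. }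
  destruct (Hd a (conj Ha0 Hat) HUa) as [eta [Heta Hder]].
  set (b := a + Rmin eta (t1 - a) / 2).
  assert (Hm1 := Rmin_l eta (t1 - a)). assert (Hm2 := Rmin_r eta (t1 - a)).
  assert (Hm0 : 0 < Rmin eta (t1 - a)) by (apply Rmin_glb_lt; lra).
  assert (Hb1 : a < b) by (unfold b; lra). assert (Hb2 : b < a + eta) by (unfold b; lra).
  assert (Hb3 : b <= t1) by (unfold b; lra).
  assert (HUb : U b <= U a).
  { destruct (Rle_dec (U b) (U a)) as [q|q]; auto. exfalso.
    destruct (cont_eps U a (Hc a (conj Ha0 Ha1)) (U b - U a)) as [d [Hd0 Hd1]]. lra.
    set (a' := a + Rmin d (b - a) / 2).
    assert (Hn1 := Rmin_l d (b - a)). assert (Hn2 := Rmin_r d (b - a)).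
    assert (Hn0 : 0 < Rmin d (b - a)) by (apply Rmin_glb_lt; lra).
    assert (Ha'1 : a < a') by (unfold a'; lra). assert (Ha'2 : a' < b) by (unfold a'; lra).
    assert (Ha'3 : Rabs (a' - a) < d) by (rewrite Rabs_pos_eq; unfold a'; lra).
    specialize (Hd1 a' Ha'3).
    destruct (MVT_gen U a' b (Derive U)) as [c [Hc1 Hc2]].
    - intros x Hx. rewrite Rmin_left in Hx by lra. rewrite Rmax_right in Hx by lra.
      apply Derive_correct. apply Hder; lra.
    - intros x Hx. rewrite Rmin_left in Hx by lra. rewrite Rmax_right in Hx by lra.
      apply continuity_pt_filterlim. apply (ex_derive_continuous (K:=R_AbsRing) (V:=R_NormedModule)). apply Hder; lra.
    - rewrite Rmin_left in Hc1 by lra. rewrite Rmax_right in Hc1 by lra.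
      assert (HD : Derive U c <= 0) by (apply Hder; lra).
      assert (Derive U c * (b - a') <= 0) by (apply Rmult_le_0_r; lra).
      unfold Rabs in Hd1; destruct Rcase_abs in Hd1; lra. }
  assert (HZb : Z b) by (split; lra).
  specialize (Hub b HZb). lra.
Qed.


Lemma cm (f g : R -> R) t : continuous f t -> continuous g t -> continuous (fun s => f s * g s) t.
Proof. intros. exact (continuous_mult f g t H H0). Qed.

Lemma cW (a b : R -> R) c1 c2 rd th0 mu W0 t : continuous a t -> continuous b t ->
  continuous (fun s => (c1 * (a s - rd)^2 + c2 * (a s - rd) * (b s - th0) + (b s - th0)^2) * exp (mu * s) - W0) t.
Proof.
  intros Ha Hb.
  assert (Ha' : continuous (fun s => a s - rd) t) by exact (continuous_minus a (fun _ => rd) t Ha (continuous_const _ _)).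
  assert (Hb' : continuous (fun s => b s - th0) t) by exact (continuous_minus b (fun _ => th0) t Hb (continuous_const _ _)).
  apply (continuous_minus _ (fun _ => W0)). 2: apply continuous_const.
  apply cm. 2: apply continuous_exp_comp; apply (cm (fun _ => mu) (fun s => s)); [apply continuous_const|apply continuous_id].
  apply (continuous_plus (fun s => c1 * (a s - rd)^2 + c2 * (a s - rd) * (b s - th0)) (fun s => (b s - th0)^2)).
  apply (continuous_plus (fun s => c1 * (a s - rd)^2) (fun s => c2 * (a s - rd) * (b s - th0))).
  apply (cm (fun _ => c1)). apply continuous_const. simpl. apply cm; auto. apply cm; auto. apply continuous_const.
  apply cm; auto. apply cm; auto. apply continuous_const.
  simpl. apply cm; auto. apply cm; auto. apply continuous_const.
Qed.

Lemma dW (a b : R -> R) c1 c2 rd th0 mu W0 s da db : is_derive a s da -> is_derive b s db ->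
  is_derive (fun s => (c1 * (a s - rd)^2 + c2 * (a s - rd) * (b s - th0) + (b s - th0)^2) * exp (mu * s) - W0) s
   (((2*c1*(a s - rd) + c2*(b s - th0))*da + (c2*(a s - rd) + 2*(b s - th0))*db + mu*(c1 * (a s - rd)^2 + c2 * (a s - rd) * (b s - th0) + (b s - th0)^2)) * exp (mu * s)).
Proof.
  intros Ha Hb. auto_derive.
  repeat split; try (eexists; eassumption).
  change (Derive (fun x => a x) s) with (Derive a s). change (Derive (fun x => b x) s) with (Derive b s).
  rewrite (is_derive_unique a s da Ha), (is_derive_unique b s db Hb). ring.
Qed.

Lemma right_eps (r : R -> R) : filterlim r (at_right 0) (locally (r 0)) ->
  forall e, 0 < e -> exists d, 0 < d /\ forall t, 0 < t < d -> Rabs (r t - r 0) < e.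
Proof.
  intros H e He. destruct (proj1 (filterlim_locally r (r 0)) H (mkposreal e He)) as [d Hd].
  exists d. split. apply cond_pos. intros t Ht. apply (Hd t).
  change (Rabs (t - 0) < d). rewrite Rabs_pos_eq; lra. lra.
Qed.

Lemma ext_cont0 (r : R -> R) : filterlim r (at_right 0) (locally (r 0)) ->
  continuous (fun t => r (Rmax 0 t)) 0.
Proof.
  intros H. apply eps_cont. intros e He. destruct (right_eps r H e He) as [d [Hd H']].
  exists d. split; auto. intros y Hy. rewrite (Rmax_left 0 0) by lra.
  destruct (Rle_dec y 0). rewrite Rmax_left by lra. unfold Rminus; rewrite Rplus_opp_r, Rabs_R0; lra.
  rewrite Rmax_right by lra. apply H'. rewrite Rminus_0_r in Hy. unfold Rabs in Hy; destruct Rcase_abs in Hy; lra.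
Qed.

Lemma ext_contp (r : R -> R) t : 0 < t -> continuous r t -> continuous (fun s => r (Rmax 0 s)) t.
Proof.
  intros Ht H. apply eps_cont. intros e He. destruct (cont_eps r t H e He) as [d [Hd H']].
  exists (Rmin d t). split. apply Rmin_glb_lt; lra. intros y Hy.
  assert (Hm1 := Rmin_l d t). assert (Hm2 := Rmin_r d t).
  rewrite (Rmax_right 0 t) by lra. rewrite Rmax_right.
  apply H'; lra. unfold Rabs in Hy; destruct Rcase_abs in Hy; lra.
Qed.

Lemma ext_der (r : R -> R) t l : 0 < t -> is_derive r t l -> is_derive (fun s => r (Rmax 0 s)) t l.
Proof.
  intros Ht H. apply is_derive_ext_loc with r; auto.
  exists (mkposreal t Ht). intros y Hy. change (Rabs (y - t) < t) in Hy.
  rewrite Rmax_right; auto. unfold Rabs in Hy; destruct Rcase_abs in Hy; lra.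
Qed.

Section Lyap.
Variables (rd th0 c1 c2 mu lam rho : R) (f1 f2 : R -> R -> R).
Hypothesis hmu : 0 < mu.
Hypothesis hlam : 0 < lam.
Hypothesis hrho : 0 < rho.
Definition Wf r th := c1 * (r - rd)^2 + c2 * (r - rd) * (th - th0) + (th - th0)^2.
Hypothesis Hlam : forall r th, lam * ((r - rd)^2 + (th - th0)^2) <= Wf r th.
Hypothesis Hdec : forall r th, Rabs (r - rd) <= rho -> Rabs (th - th0) <= rho ->
  (2*c1*(r - rd) + c2*(th - th0)) * f1 r th + (c2*(r - rd) + 2*(th - th0)) * f2 r th + mu * Wf r th <= 0.

Lemma W_rect r th : Wf r th < lam * rho^2 -> Rabs (r - rd) <= rho /\ Rabs (th - th0) <= rho.
Proof.
  intros H. assert (H1 := Hlam r th).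
  assert (H2 : (r - rd)^2 + (th - th0)^2 < rho^2).
  { apply Rmult_lt_reg_l with lam; auto. lra. }
  assert (0 <= (r - rd)^2) by apply pow2_ge_0. assert (0 <= (th - th0)^2) by apply pow2_ge_0.
  split; apply Rabs_le; split; nra.
Qed.

Lemma lyap (F1 F2 : R -> R -> R) (T : Rbar) (r th : R -> R) :
  (forall a b, Rabs (a - rd) <= rho -> Rabs (b - th0) <= rho -> F1 a b = f1 a b /\ F2 a b = f2 a b) ->
  (forall t, 0 < t -> Rbar_lt t T -> is_derive r t (F1 (r t) (th t)) /\ is_derive th t (F2 (r t) (th t))) ->
  filterlim r (at_right 0) (locally (r 0)) ->
  filterlim th (at_right 0) (locally (th 0)) ->
  Wf (r 0) (th 0) < lam * rho^2 ->
  forall t, 0 <= t -> Rbar_lt t T -> Wf (r t) (th t) <= Wf (r 0) (th 0) * exp (- mu * t).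
Proof.
  intros Hag Hder Hr Hth HW0 t1 Ht1 HT1.
  set (W0 := Wf (r 0) (th 0)).
  set (U := fun s => (c1 * (r (Rmax 0 s) - rd)^2 + c2 * (r (Rmax 0 s) - rd) * (th (Rmax 0 s) - th0) + (th (Rmax 0 s) - th0)^2) * exp (mu * s) - W0).
  assert (HcU : forall t, 0 <= t <= t1 -> continuous U t).
  { intros t Ht. unfold U. apply cW.
    destruct (Req_dec t 0). subst; apply ext_cont0; auto.
    apply ext_contp. lra. apply (ex_derive_continuous (K:=R_AbsRing) (V:=R_NormedModule)).
    eexists. apply (Hder t). lra. destruct T; simpl in *; auto; lra.
    destruct (Req_dec t 0). subst; apply ext_cont0; auto.
    apply ext_contp. lra. apply (ex_derive_continuous (K:=R_AbsRing) (V:=R_NormedModule)).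
    eexists. apply (Hder t). lra. destruct T; simpl in *; auto; lra. }
  assert (HU : U t1 <= 0).
  { apply barrier; auto.
    - unfold U. rewrite Rmax_left by lra. rewrite Rmult_0_r, exp_0. unfold W0, Wf. lra.
    - intros t Ht HUt.
      assert (HWt : Wf (r (Rmax 0 t)) (th (Rmax 0 t)) * exp (mu * t) <= W0).
      { unfold U in HUt. unfold Wf. lra. }
      assert (He1 : 1 <= exp (mu * t)).
      { rewrite <- exp_0. destruct (Req_dec t 0). subst. rewrite Rmult_0_r. lra.
        apply Rlt_le, exp_increasing. nra. }
      assert (HW0p : 0 <= W0).
      { unfold W0. eapply Rle_trans; [|apply Hlam]. apply Rmult_le_pos. lra.
        apply Rplus_le_le_0_compat; apply pow2_ge_0. }
      assert (HWnn : 0 <= Wf (r (Rmax 0 t)) (th (Rmax 0 t))).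
      { eapply Rle_trans; [|apply Hlam]. apply Rmult_le_pos. lra.
        apply Rplus_le_le_0_compat; apply pow2_ge_0. }
      assert (HWK : Wf (r (Rmax 0 t)) (th (Rmax 0 t)) < lam * rho^2).
      { assert (Wf (r (Rmax 0 t)) (th (Rmax 0 t)) * 1 <= Wf (r (Rmax 0 t)) (th (Rmax 0 t)) * exp (mu * t))
          by (apply Rmult_le_compat_l; lra). unfold W0 in *. lra. }
      assert (Hcw : continuous (fun s => Wf (r (Rmax 0 s)) (th (Rmax 0 s)) * exp (0 * s) - 0) t).
      { unfold Wf. apply cW.
        destruct (Req_dec t 0). subst; apply ext_cont0; auto.
        apply ext_contp. lra. apply (ex_derive_continuous (K:=R_AbsRing) (V:=R_NormedModule)).
        eexists. apply (Hder t). lra. destruct T; simpl in *; auto; lra.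
        destruct (Req_dec t 0). subst; apply ext_cont0; auto.
        apply ext_contp. lra. apply (ex_derive_continuous (K:=R_AbsRing) (V:=R_NormedModule)).
        eexists. apply (Hder t). lra. destruct T; simpl in *; auto; lra. }
      destruct (cont_eps _ t Hcw (lam * rho^2 - Wf (r (Rmax 0 t)) (th (Rmax 0 t)))) as [eta [Heta Hsm]]. lra.
      exists eta. split; auto. intros s Hs Hst.
      assert (Hs0 : 0 < s) by lra.
      assert (HsT : Rbar_lt s T). { destruct T; simpl in *; auto; lra. }
      assert (Hws : Wf (r s) (th s) < lam * rho^2).
      { assert (Habs : Rabs (s - t) < eta) by (rewrite Rabs_pos_eq; lra).
        specialize (Hsm s Habs). rewrite !Rmult_0_l, !exp_0, !Rmult_1_r, !Rminus_0_r in Hsm.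
        rewrite (Rmax_right 0 s) in Hsm by lra.
        unfold Rabs in Hsm; destruct Rcase_abs in Hsm; lra. }
      destruct (W_rect _ _ Hws) as [Hx Hy].
      destruct (Hder s Hs0 HsT) as [D1 D2].
      destruct (Hag _ _ Hx Hy) as [E1 E2]. rewrite E1 in D1. rewrite E2 in D2.
      assert (HD := dW (fun s => r (Rmax 0 s)) (fun s => th (Rmax 0 s)) c1 c2 rd th0 mu W0 s _ _
                 (ext_der r s _ Hs0 D1) (ext_der th s _ Hs0 D2)).
      split. eexists; exact HD.
      rewrite (is_derive_unique U s _ HD). rewrite (Rmax_right 0 s) by lra.
      apply Rmult_le_0_r. apply Hdec; auto. apply Rlt_le, exp_pos. }
  unfold U in HU. rewrite Rmax_right in HU by lra.
  assert (HU' : Wf (r t1) (th t1) * exp (mu * t1) <= W0) by (unfold Wf; lra).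
  apply Rmult_le_compat_r with (r := exp (- mu * t1)) in HU'. 2: apply Rlt_le, exp_pos.
  rewrite Rmult_assoc, <- exp_plus in HU'. replace (mu * t1 + - mu * t1) with 0 in HU' by ring.
  rewrite exp_0, Rmult_1_r in HU'. exact HU'.
Qed.
End Lyap.


Lemma abs_le x a : Rabs x <= a -> -a <= x <= a.
Proof. unfold Rabs; destruct Rcase_abs; lra. Qed.

Lemma params (rd k : R) : 0 < rd -> 1 / rd < k ->
  0 < k /\ 1 < k * rd /\ 0 < r_a rd k /\ r_a rd k < rd /\ (r_a rd k)^2 = rd^2 - 1/k^2 /\
  sqrt (1 - (r_a rd k / rd)^2) = 1 / (k * rd).
Proof.
  intros hrd hk.
  assert (h1 : 0 < 1 / rd) by (apply Rdiv_lt_0_compat; lra).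
  assert (hk0 : 0 < k) by lra.
  assert (hkr : 1 < k * rd).
  { apply Rmult_lt_compat_r with (r := rd) in hk; auto.
    replace (1 / rd * rd) with 1 in hk by (field; lra). lra. }
  assert (hpos : 0 < rd ^ 2 - 1 / k ^ 2).
  { replace (rd ^ 2 - 1 / k ^ 2) with (((k*rd)^2 - 1) / k^2) by (field; lra).
    apply Rdiv_lt_0_compat. nra. nra. }
  assert (hra2 : (r_a rd k)^2 = rd^2 - 1/k^2) by (unfold r_a; apply pow2_sqrt; lra).
  assert (hra : 0 < r_a rd k) by (unfold r_a; apply sqrt_lt_R0; lra).
  assert (hrad : r_a rd k < rd).
  { assert (0 < 1 / k^2) by (apply Rdiv_lt_0_compat; nra). nra. }
  repeat split; auto.
  replace (1 - (r_a rd k / rd) ^ 2) with ((1 / (k * rd))^2).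
  apply sqrt_pow2. apply Rlt_le, Rdiv_lt_0_compat; nra.
  replace ((r_a rd k / rd) ^ 2) with ((r_a rd k)^2 / rd^2) by (field; lra).
  rewrite hra2. field. lra.
Qed.

Lemma div01 a r : 0 <= a -> a <= r -> 0 < r -> 0 <= a / r <= 1.
Proof.
  intros. split. unfold Rdiv; apply Rmult_le_pos; [lra | apply Rlt_le, Rinv_0_lt_compat; lra].
  apply Rmult_le_reg_r with r; auto. unfold Rdiv; rewrite Rmult_assoc, Rinv_l; lra.
Qed.

Lemma fth_form V k ra r th : 0 <= ra -> ra <= r -> 0 < r ->
  f_th V k ra r th = - k * V * sqrt (1 - (ra / r)^2) + k * V * cos th + V * sin th / r.
Proof.
  intros h0 h1 h2. unfold f_th, omega. destruct (Rle_dec ra r); [|lra].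
  rewrite Rtrigo_facts.cos_pi_minus, cos_asin, Rsqr_pow2. ring.
  destruct (div01 ra r); auto. lra.
Qed.

Lemma lin_err f x0 l : derivable_pt_lim f x0 l -> forall e, 0 < e -> exists d, 0 < d /\
  forall h, Rabs h < d -> Rabs (f (x0 + h) - f x0 - l * h) <= e * Rabs h.
Proof.
  intros H e He. destruct (H e He) as [d Hd]. exists d. split. apply cond_pos.
  intros h Hh. destruct (Req_dec h 0) as [->|Hn].
  - rewrite Rplus_0_r, Rabs_R0. replace (f x0 - f x0 - l * 0) with 0 by ring. rewrite Rabs_R0. lra.
  - specialize (Hd h Hn Hh).
    replace (f (x0 + h) - f x0 - l * h) with (h * ((f (x0 + h) - f x0) / h - l)) by (field; auto).
    rewrite Rabs_mult. rewrite Rmult_comm. apply Rmult_le_compat_r. apply Rabs_pos. lra.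
Qed.

Definition hfun V k ra rd x := - k * V * sqrt (1 - (ra / (rd + x))^2) + V / (rd + x).

Lemma hfun_der V rd k : 0 < rd -> 1 / rd < k -> derivable_pt_lim (hfun V k (r_a rd k) rd) 0 (- k^2 * V).
Proof.
  intros hrd hk. destruct (params rd k hrd hk) as [hk0 [hkr [hra [hrad [hra2 hsq]]]]].
  assert (Eq : 1 + - (r_a rd k * / rd * (r_a rd k * / rd * 1)) = (1/(k*rd))^2).
  { replace (r_a rd k * / rd * (r_a rd k * / rd * 1)) with ((r_a rd k)^2 / rd^2) by (field; lra).
    rewrite hra2. field. lra. }
  assert (Hs : 0 < 1/(k*rd)) by (apply Rdiv_lt_0_compat; nra).
  apply is_derive_Reals. unfold hfun. auto_derive; rewrite !Rplus_0_r.
  - rewrite Eq. repeat split; try lra. apply pow_lt; lra.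
  - rewrite Eq, sqrt_pow2 by lra.
    transitivity (-(k^2) * V * (r_a rd k)^2 / rd^2 - V/rd^2). field. split; lra.
    rewrite hra2. field. lra.
Qed.

Lemma dec_alg V k x y E1 E2 : 0 < V -> 0 < k ->
  Rabs E1 <= V * (k^3/(k^2+1)) / (4*(3*k^2+2*k+2)) * (Rabs x + Rabs y) ->
  Rabs E2 <= V * (k^3/(k^2+1)) / (4*(3*k^2+2*k+2)) * (Rabs x + Rabs y) ->
  (3*k^2*x + k*y)*(V*y + E1) + (k*x + 2*y)*(-(k^2)*V*x - k*V*y + E2)
   + V * (k^3/(k^2+1)) / (2*(2*k^2+2)) * ((3*k^2/2)*x^2 + k*x*y + y^2) <= 0.
Proof.
  intros hV hk h1 h2.
  set (m := k^3/(k^2+1)) in *.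
  assert (hk3 : 0 < k^3) by (apply pow_lt; lra).
  assert (hk2 : 0 < k^2) by (apply pow_lt; lra).
  assert (hm : 0 < m) by (unfold m; apply Rdiv_lt_0_compat; lra).
  assert (hm1 : m <= k^3). { unfold m. apply Rmult_le_reg_r with (k^2+1). nra.
    unfold Rdiv. rewrite Rmult_assoc, Rinv_l by nra.
    assert (0 <= k^3 * k^2) by nra. nra. }
  assert (hm2 : m <= k). { unfold m. apply Rmult_le_reg_r with (k^2+1). nra.
    unfold Rdiv. rewrite Rmult_assoc, Rinv_l by nra.
    replace (k^3) with (k * k^2) by ring. nra. }
  set (C := 3*k^2+2*k+2).
  assert (hC : 0 < C) by (unfold C; nra).
  set (eta := V * m / (4 * C)) in *.
  assert (heta : 0 < eta) by (unfold eta; apply Rdiv_lt_0_compat; nra).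
  set (X := Rabs x). set (Y := Rabs y).
  assert (hX : 0 <= X) by apply Rabs_pos. assert (hY : 0 <= Y) by apply Rabs_pos.
  assert (hx2 : x^2 = X^2) by (unfold X; rewrite <- Rsqr_pow2, <- Rsqr_pow2; apply Rsqr_abs).
  assert (hy2 : y^2 = Y^2) by (unfold Y; rewrite <- Rsqr_pow2, <- Rsqr_pow2; apply Rsqr_abs).
  assert (Lin : (3*k^2*x + k*y)*(V*y) + (k*x + 2*y)*(-(k^2)*V*x - k*V*y) <= - V * m * (x^2 + y^2)).
  { replace ((3*k^2*x + k*y)*(V*y) + (k*x + 2*y)*(-(k^2)*V*x - k*V*y)) with (- V * (k^3 * x^2 + k * y^2)) by ring.
    assert (0 <= x^2) by apply pow2_ge_0. assert (0 <= y^2) by apply pow2_ge_0.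
    assert (m * x^2 <= k^3 * x^2) by (apply Rmult_le_compat_r; lra).
    assert (m * y^2 <= k * y^2) by (apply Rmult_le_compat_r; lra). nra. }
  assert (Err : Rabs ((3*k^2*x + k*y)*E1 + (k*x + 2*y)*E2) <= V * m / 2 * (x^2 + y^2)).
  { eapply Rle_trans. apply Rabs_triang. rewrite !Rabs_mult.
    assert (a1 : Rabs (3*k^2*x + k*y) <= 3*k^2*X + k*Y).
    { eapply Rle_trans. apply Rabs_triang. rewrite (Rabs_mult (3*k^2) x), (Rabs_mult k y).
      rewrite (Rabs_pos_eq (3*k^2)), (Rabs_pos_eq k) by nra. unfold X, Y. lra. }
    assert (a2 : Rabs (k*x + 2*y) <= k*X + 2*Y).
    { eapply Rle_trans. apply Rabs_triang. rewrite (Rabs_mult k x), (Rabs_mult 2 y).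
      rewrite (Rabs_pos_eq 2), (Rabs_pos_eq k) by nra. unfold X, Y. lra. }
    assert (b1 : Rabs (3*k^2*x + k*y) * Rabs E1 <= (3*k^2*X + k*Y) * (eta * (X + Y)))
      by (apply Rmult_le_compat; auto using Rabs_pos).
    assert (b2 : Rabs (k*x + 2*y) * Rabs E2 <= (k*X + 2*Y) * (eta * (X + Y)))
      by (apply Rmult_le_compat; auto using Rabs_pos).
    assert (b3 : (3*k^2*X + k*Y) + (k*X + 2*Y) <= C * (X + Y)) by (unfold C; nra).
    assert (b4 : ((3*k^2*X + k*Y) + (k*X + 2*Y)) * (eta * (X + Y)) <= C * (X + Y) * (eta * (X + Y))).
    { apply Rmult_le_compat_r; nra. }
    assert (b5 : (X + Y)^2 <= 2 * (X^2 + Y^2)) by (assert (0 <= (X-Y)^2) by apply pow2_ge_0; nra).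
    assert (b6 : C * (X + Y) * (eta * (X + Y)) = C * eta * (X + Y)^2) by ring.
    assert (b7 : C * eta = V * m / 4) by (unfold eta; field; lra).
    rewrite hx2, hy2.
    assert (b8 : V * m / 4 * (X + Y)^2 <= V * m / 4 * (2 * (X^2 + Y^2))).
    { apply Rmult_le_compat_l; auto. apply Rlt_le, Rdiv_lt_0_compat; nra. }
    assert (b9 : (3*k^2*X + k*Y) * (eta * (X + Y)) + (k*X + 2*Y) * (eta * (X + Y)) =
      ((3*k^2*X + k*Y) + (k*X + 2*Y)) * (eta * (X + Y))) by ring.
    rewrite b6, b7 in b4. lra. }
  assert (Wb : (3*k^2/2)*x^2 + k*x*y + y^2 <= (2*k^2+2)*(x^2+y^2)).
  { assert (0 <= (k*x - y)^2) by apply pow2_ge_0. assert (0 <= x^2) by apply pow2_ge_0.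
    assert (0 <= y^2) by apply pow2_ge_0. nra. }
  assert (Mu : V * m / (2 * (2*k^2+2)) * ((3*k^2/2)*x^2 + k*x*y + y^2) <= V * m / 2 * (x^2 + y^2)).
  { replace (V * m / 2 * (x^2 + y^2)) with (V * m / (2 * (2*k^2+2)) * ((2*k^2+2)*(x^2+y^2))) by (field; nra).
    apply Rmult_le_compat_l; auto. apply Rlt_le, Rdiv_lt_0_compat; nra. }
  assert (Eq : (3*k^2*x + k*y)*(V*y + E1) + (k*x + 2*y)*(-(k^2)*V*x - k*V*y + E2) =
     ((3*k^2*x + k*y)*(V*y) + (k*x + 2*y)*(-(k^2)*V*x - k*V*y)) + ((3*k^2*x + k*y)*E1 + (k*x + 2*y)*E2)) by ring.
  rewrite Eq.
  assert (Rabs_le' := Rle_abs ((3*k^2*x + k*y)*E1 + (k*x + 2*y)*E2)).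
  lra.
Qed.

Definition etaV V k := V * (k^3/(k^2+1)) / (4*(3*k^2+2*k+2)).
Definition muV V k := V * (k^3/(k^2+1)) / (2*(2*k^2+2)).

Lemma Hdec_conc V rd k rho r th : 0 < V -> 0 < rd -> 1 / rd < k ->
  rho <= rd / 2 -> rho <= (rd - r_a rd k) / 2 ->
  (forall h, Rabs h <= rho -> Rabs (sin h - h) <= etaV V k / (3 * V * (k+1)) * Rabs h) ->
  (forall h, Rabs h <= rho -> Rabs (cos h - 1) <= etaV V k * rd / (6 * V) * Rabs h) ->
  (forall h, Rabs h <= rho -> Rabs (hfun V k (r_a rd k) rd h + k^2 * V * h) <= etaV V k / 3 * Rabs h) ->
  Rabs (r - rd) <= rho -> Rabs (th - PI/2) <= rho ->
  (2 * (3*k^2/2) * (r - rd) + k * (th - PI/2)) * f_r V r th +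
  (k * (r - rd) + 2 * (th - PI/2)) * f_th V k (r_a rd k) r th +
  muV V k * ((3*k^2/2) * (r - rd)^2 + k * (r - rd) * (th - PI/2) + (th - PI/2)^2) <= 0.
Proof.
  intros hV hrd hk hr1 hr2 Hs Hc Hh Hx Hy.
  destruct (params rd k hrd hk) as [hk0 [hkr [hra [hrad [hra2 hsq]]]]].
  set (ra := r_a rd k) in *.
  set (x := r - rd) in *. set (y := th - PI/2) in *.
  assert (hr : r = rd + x) by (unfold x; ring).
  assert (hth : th = PI/2 + y) by (unfold y; ring).
  assert (hxr : Rabs x <= rd/2) by lra.
  assert (hrpos : rd / 2 <= r). { rewrite hr. apply abs_le in hxr. lra. }
  assert (hrra : ra <= r). { rewrite hr. assert (Hx' := abs_le _ _ Hx). lra. }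
  assert (Ef1 : f_r V r th = V * y + V * (sin y - y)).
  { unfold f_r. rewrite hth, (sin_cos y). ring. }
  assert (Ef2 : f_th V k ra r th = -(k^2)*V*x - k*V*y +
      ((hfun V k ra rd x + k^2 * V * x) - k * V * (sin y - y) + V * (cos y - 1) / r)).
  { rewrite fth_form by lra. unfold hfun. rewrite <- hr.
    rewrite hth, sin_plus, cos_plus, sin_PI2, cos_PI2. field. lra. }
  rewrite Ef1, Ef2.
  set (eta := etaV V k) in *.
  assert (heta : 0 < eta).
  { unfold eta, etaV. apply Rdiv_lt_0_compat. apply Rmult_lt_0_compat; auto.
    apply Rdiv_lt_0_compat; [apply pow_lt; lra | nra]. nra. }
  assert (hX := Rabs_pos x). assert (hY := Rabs_pos y).
  assert (B1 : Rabs (V * (sin y - y)) <= eta * (Rabs x + Rabs y)).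
  { rewrite Rabs_mult, (Rabs_pos_eq V) by lra.
    specialize (Hs y Hy).
    apply Rle_trans with (V * (eta / (3 * V * (k + 1)) * Rabs y)). apply Rmult_le_compat_l; lra.
    replace (V * (eta / (3 * V * (k + 1)) * Rabs y)) with (eta * Rabs y / (3 * (k+1))) by (field; lra).
    assert (eta * Rabs y / (3 * (k + 1)) <= eta * Rabs y).
    { apply Rmult_le_reg_r with (3*(k+1)). lra. unfold Rdiv. rewrite Rmult_assoc, Rinv_l by lra.
      assert (0 <= eta * Rabs y) by (apply Rmult_le_pos; lra). nra. }
    nra. }
  assert (B2 : Rabs ((hfun V k ra rd x + k^2 * V * x) - k * V * (sin y - y) + V * (cos y - 1) / r)
             <= eta * (Rabs x + Rabs y)).
  { eapply Rle_trans. apply Rabs_triang. eapply Rle_trans. apply Rplus_le_compat_r. apply Rabs_triang.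
    rewrite Rabs_Ropp.
    assert (c1 := Hh x Hx).
    assert (c2 : Rabs (k * V * (sin y - y)) <= eta / 3 * Rabs y).
    { rewrite Rabs_mult, (Rabs_pos_eq (k * V)) by nra. specialize (Hs y Hy).
      apply Rle_trans with (k * V * (eta / (3 * V * (k + 1)) * Rabs y)). apply Rmult_le_compat_l; nra.
      replace (k * V * (eta / (3 * V * (k + 1)) * Rabs y)) with (eta / 3 * Rabs y * (k / (k+1))) by (field; lra).
      assert (0 <= eta / 3 * Rabs y) by (apply Rmult_le_pos; lra).
      assert (k / (k+1) <= 1). { apply Rmult_le_reg_r with (k+1). lra. unfold Rdiv. rewrite Rmult_assoc, Rinv_l by lra. lra. }
      assert (0 <= k / (k+1)) by (apply Rlt_le, Rdiv_lt_0_compat; lra). nra. }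
    assert (c3 : Rabs (V * (cos y - 1) / r) <= eta / 3 * Rabs y).
    { unfold Rdiv. rewrite !Rabs_mult, (Rabs_pos_eq V) by lra.
      rewrite (Rabs_pos_eq (/ r)) by (apply Rlt_le, Rinv_0_lt_compat; lra).
      specialize (Hc y Hy).
      assert (hir : / r <= 2 / rd). { apply Rmult_le_reg_r with (r * rd). nra.
        replace (/ r * (r * rd)) with rd by (field; lra). replace (2 / rd * (r * rd)) with (2 * r) by (field; lra). lra. }
      assert (0 < / r) by (apply Rinv_0_lt_compat; lra).
      assert (0 <= Rabs (cos y - 1)) by apply Rabs_pos.
      apply Rle_trans with (V * (eta * rd / (6 * V) * Rabs y) * (2 / rd)).
      apply Rmult_le_compat. apply Rmult_le_pos; lra. lra. apply Rmult_le_compat_l; lra. lra.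
      right. field. lra. }
    assert (0 <= eta * Rabs x) by (apply Rmult_le_pos; lra).
    assert (0 <= eta * Rabs y) by (apply Rmult_le_pos; lra).
    lra. }
  replace (2 * (3 * k ^ 2 / 2)) with (3 * k^2) by field.
  unfold muV.
  apply dec_alg; auto.
Qed.


Lemma sin_lip a b : Rabs (sin a - sin b) <= Rabs (a - b).
Proof.
  destruct (MVT_gen sin b a cos) as [c [_ Hc]].
  - intros; apply is_derive_Reals, derivable_pt_lim_sin.
  - intros; apply continuity_sin.
  - rewrite Hc, Rabs_mult. rewrite <- (Rmult_1_l (Rabs (a - b))) at 2.
    apply Rmult_le_compat_r. apply Rabs_pos. apply Rabs_le. apply COS_bound.
Qed.

Lemma cos_lip a b : Rabs (cos a - cos b) <= Rabs (a - b).
Proof.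
  destruct (MVT_gen cos b a (fun x => - sin x)) as [c [_ Hc]].
  - intros; apply is_derive_Reals, derivable_pt_lim_cos.
  - intros; apply continuity_cos.
  - rewrite Hc, Rabs_mult, Rabs_Ropp. rewrite <- (Rmult_1_l (Rabs (a - b))) at 2.
    apply Rmult_le_compat_r. apply Rabs_pos. apply Rabs_le. apply SIN_bound.
Qed.

Lemma sqrt_lip c a b : 0 < c -> c <= a -> c <= b -> Rabs (sqrt a - sqrt b) <= Rabs (a - b) / (2 * sqrt c).
Proof.
  intros hc ha hb.
  assert (sc := sqrt_lt_R0 c hc).
  assert (sa : sqrt c <= sqrt a) by (apply sqrt_le_1; lra).
  assert (sb : sqrt c <= sqrt b) by (apply sqrt_le_1; lra).
  assert (E : (sqrt a - sqrt b) * (sqrt a + sqrt b) = a - b).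
  { replace ((sqrt a - sqrt b) * (sqrt a + sqrt b)) with (sqrt a * sqrt a - sqrt b * sqrt b) by ring.
    rewrite !sqrt_sqrt by lra. ring. }
  apply Rmult_le_reg_r with (2 * sqrt c). lra.
  replace (Rabs (a - b) / (2 * sqrt c) * (2 * sqrt c)) with (Rabs (a - b)) by (field; lra).
  rewrite <- E, Rabs_mult, (Rabs_pos_eq (sqrt a + sqrt b)) by lra.
  apply Rmult_le_compat_l. apply Rabs_pos. lra.
Qed.

Lemma inv_lip rm r r' : 0 < rm -> rm <= r -> rm <= r' -> Rabs (/ r - / r') <= Rabs (r - r') / rm^2.
Proof.
  intros h h1 h2.
  replace (/ r - / r') with ((r' - r) / (r * r')) by (field; lra).
  unfold Rdiv. rewrite Rabs_mult, Rabs_minus_sym. apply Rmult_le_compat_l. apply Rabs_pos.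
  rewrite Rabs_pos_eq by (apply Rlt_le, Rinv_0_lt_compat; nra).
  apply Rinv_le_contravar. nra. simpl. rewrite Rmult_1_r. apply Rmult_le_compat; lra.
Qed.

Lemma inv2_lip rm r r' : 0 < rm -> rm <= r -> rm <= r' -> Rabs (/ r^2 - / r'^2) <= 2 * Rabs (r - r') / rm^3.
Proof.
  intros h h1 h2.
  replace (/ r^2 - / r'^2) with ((/ r - / r') * (/ r + / r')) by (field; lra).
  rewrite Rabs_mult.
  assert (i1 := inv_lip rm r r' h h1 h2).
  assert (i2 : Rabs (/ r + / r') <= 2 / rm).
  { rewrite Rabs_pos_eq. 2: { assert (0 < / r) by (apply Rinv_0_lt_compat; lra).
      assert (0 < / r') by (apply Rinv_0_lt_compat; lra). lra. }
    assert (/ r <= / rm) by (apply Rinv_le_contravar; lra).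
    assert (/ r' <= / rm) by (apply Rinv_le_contravar; lra).
    unfold Rdiv. lra. }
  apply Rle_trans with (Rabs (r - r') / rm^2 * (2 / rm)).
  apply Rmult_le_compat; auto using Rabs_pos.
  right. field. lra.
Qed.

Definition clamp a b z := Rmax a (Rmin b z).

Lemma clamp_in a b z : a <= b -> a <= clamp a b z <= b.
Proof. intros. unfold clamp, Rmax, Rmin. repeat destruct Rle_dec; lra. Qed.
Lemma clamp_id a b z : a <= z <= b -> clamp a b z = z.
Proof. intros. unfold clamp, Rmax, Rmin. repeat destruct Rle_dec; lra. Qed.
Lemma clamp_lip a b z z' : a <= b -> Rabs (clamp a b z - clamp a b z') <= Rabs (z - z').
Proof. intros. unfold clamp, Rmax, Rmin. repeat destruct Rle_dec; unfold Rabs; repeat destruct Rcase_abs; lra. Qed.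

Lemma tri3b a b c : Rabs (a + b - c) <= Rabs a + Rabs b + Rabs c.
Proof. unfold Rabs; repeat destruct Rcase_abs; lra. Qed.

Lemma modfield V rd k rho : 0 < V -> 0 < rd -> 1 / rd < k -> 0 < rho ->
  rho <= rd / 2 -> rho <= (rd - r_a rd k) / 2 ->
  exists B L, 0 < B /\ 0 < L /\
   (forall a b, Rabs (f_r V a b) <= B) /\
   (forall a b, Rabs (f_th V k (r_a rd k) (clamp (rd - rho) (rd + rho) a) b) <= B) /\
   (forall a b a' b', Rabs (f_r V a b - f_r V a' b') +
       Rabs (f_th V k (r_a rd k) (clamp (rd - rho) (rd + rho) a) b - f_th V k (r_a rd k) (clamp (rd - rho) (rd + rho) a') b')
       <= L * (Rabs (a - a') + Rabs (b - b'))).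
Proof.
  intros hV hrd hk hrho h1 h2.
  destruct (params rd k hrd hk) as [hk0 [hkr [hra [hrad [hra2 hsq]]]]].
  set (ra := r_a rd k) in *.
  set (rm := rd - rho).
  assert (hrm : rd / 2 <= rm) by (unfold rm; lra).
  assert (hrm0 : 0 < rm) by lra.
  assert (hrmra : ra < rm) by (unfold rm; lra).
  set (cl := clamp (rd - rho) (rd + rho)).
  assert (Hcl : forall a, rm <= cl a <= rd + rho) by (intros; apply clamp_in; lra).
  set (cmin := 1 - (ra / rm)^2).
  assert (hq : 0 <= ra / rm < 1).
  { split. apply Rlt_le, Rdiv_lt_0_compat; lra.
    apply Rmult_lt_reg_r with rm; auto. unfold Rdiv. rewrite Rmult_assoc, Rinv_l; lra. }
  assert (hcmin : 0 < cmin) by (unfold cmin; nra).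
  assert (Hc : forall a, cmin <= 1 - (ra / cl a)^2).
  { intros a. destruct (Hcl a). unfold cmin.
    assert (ra / cl a <= ra / rm). { apply Rmult_le_compat_l. lra. apply Rinv_le_contravar; lra. }
    assert (0 <= ra / cl a) by (apply Rlt_le, Rdiv_lt_0_compat; lra). nra. }
  set (L1 := ra^2 / (rm^3 * sqrt cmin)).
  assert (hsc := sqrt_lt_R0 cmin hcmin).
  assert (hL1 : 0 < L1) by (unfold L1; apply Rdiv_lt_0_compat; [nra | apply Rmult_lt_0_compat; [apply pow_lt|]; lra]).
  assert (HS : forall a a', Rabs (sqrt (1 - (ra / cl a)^2) - sqrt (1 - (ra / cl a')^2)) <= L1 * Rabs (a - a')).
  { intros a a'. eapply Rle_trans. apply (sqrt_lip cmin); auto.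
    replace (1 - (ra / cl a)^2 - (1 - (ra / cl a')^2)) with (ra^2 * (/ (cl a')^2 - / (cl a)^2)) by
      (destruct (Hcl a), (Hcl a'); field; lra).
    rewrite Rabs_mult, (Rabs_pos_eq (ra^2)) by nra.
    destruct (Hcl a), (Hcl a').
    assert (i := inv2_lip rm (cl a') (cl a) hrm0 ltac:(lra) ltac:(lra)).
    assert (j : Rabs (cl a' - cl a) <= Rabs (a - a')) by (rewrite (Rabs_minus_sym a a'); apply clamp_lip; lra).
    apply Rle_trans with (ra^2 * (2 * Rabs (a - a') / rm^3) / (2 * sqrt cmin)).
    { unfold Rdiv. apply Rmult_le_compat_r. apply Rlt_le, Rinv_0_lt_compat; lra.
      apply Rmult_le_compat_l. nra. eapply Rle_trans. apply i.
      unfold Rdiv. apply Rmult_le_compat_r. apply Rlt_le, Rinv_0_lt_compat, pow_lt; lra. lra. }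
    right. unfold L1. field. split; lra. }
  exists (V + 2 * k * V + V / rm), (V + k * V + V / rm + k * V * L1 + V / rm^2).
  assert (hVrm : 0 < V / rm) by (apply Rdiv_lt_0_compat; lra).
  assert (hVrm2 : 0 < V / rm^2) by (apply Rdiv_lt_0_compat; [lra | apply pow_lt; lra]).
  assert (hkV : 0 < k * V) by nra.
  assert (hkVL : 0 < k * V * L1) by nra.
  assert (Hfr : forall a b, f_r V a b = - V * cos b) by reflexivity.
  assert (Hform : forall a b, f_th V k ra (cl a) b = - k * V * sqrt (1 - (ra / cl a)^2) + k * V * cos b + V * sin b / cl a).
  { intros. destruct (Hcl a). apply fth_form; lra. }
  split. lra. split. lra. split; [|split].
  - intros a b. rewrite Hfr, Rabs_mult, Rabs_Ropp, Rabs_pos_eq by lra.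
    assert (Rabs (cos b) <= 1) by (apply Rabs_le; apply COS_bound).
    assert (V * Rabs (cos b) <= V * 1) by (apply Rmult_le_compat_l; lra). lra.
  - intros a b. fold cl. rewrite Hform. destruct (Hcl a).
    assert (s1 : 0 <= sqrt (1 - (ra / cl a)^2) <= 1).
    { split. apply sqrt_pos. apply Rle_trans with (sqrt 1); [|rewrite sqrt_1; lra]. apply sqrt_le_1. specialize (Hc a); lra. lra.
      assert (0 <= (ra / cl a)^2) by apply pow2_ge_0. lra. }
    assert (Rabs (cos b) <= 1) by (apply Rabs_le; apply COS_bound).
    assert (Rabs (sin b) <= 1) by (apply Rabs_le; apply SIN_bound).
    eapply Rle_trans. apply Rabs_triang. eapply Rle_trans. apply Rplus_le_compat_r. apply Rabs_triang.
    rewrite !Rabs_mult. unfold Rdiv. rewrite !Rabs_mult.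
    rewrite Rabs_Ropp, !(Rabs_pos_eq k), (Rabs_pos_eq V), (Rabs_pos_eq (sqrt _)) by lra.
    rewrite (Rabs_pos_eq (/ cl a)) by (apply Rlt_le, Rinv_0_lt_compat; lra).
    assert (/ cl a <= / rm) by (apply Rinv_le_contravar; lra).
    assert (0 < / cl a) by (apply Rinv_0_lt_compat; lra).
    assert (k * V * sqrt (1 - (ra / cl a) ^ 2) <= k * V) by nra.
    assert (k * V * Rabs (cos b) <= k * V) by nra.
    assert (V * Rabs (sin b) * / cl a <= V * / rm).
    { apply Rmult_le_compat. apply Rmult_le_pos; [lra|apply Rabs_pos]. lra. nra. lra. }
    unfold Rdiv in *. lra.
  - intros a b a' b'. fold cl. rewrite !Hfr, !Hform.
    destruct (Hcl a), (Hcl a').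
    assert (j := clamp_lip (rd - rho) (rd + rho) a a' ltac:(lra)). fold cl in j.
    assert (e1 : Rabs (- V * cos b - - V * cos b') <= V * Rabs (b - b')).
    { replace (- V * cos b - - V * cos b') with (- V * (cos b - cos b')) by ring.
      rewrite Rabs_mult, Rabs_Ropp, (Rabs_pos_eq V) by lra. apply Rmult_le_compat_l. lra. apply cos_lip. }
    assert (e2 : Rabs (- k * V * sqrt (1 - (ra / cl a)^2) + k * V * sqrt (1 - (ra / cl a')^2)) <= k * V * L1 * Rabs (a - a')).
    { replace (- k * V * sqrt (1 - (ra / cl a)^2) + k * V * sqrt (1 - (ra / cl a')^2)) with
        (- (k * V) * (sqrt (1 - (ra / cl a)^2) - sqrt (1 - (ra / cl a')^2))) by ring.
      rewrite Rabs_mult, Rabs_Ropp, (Rabs_pos_eq (k * V)) by lra. replace (k * V * L1 * Rabs (a - a')) with (k * V * (L1 * Rabs (a - a'))) by ring.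
      apply Rmult_le_compat_l. lra. apply HS. }
    assert (e3 : Rabs (k * V * cos b - k * V * cos b') <= k * V * Rabs (b - b')).
    { replace (k * V * cos b - k * V * cos b') with (k * V * (cos b - cos b')) by ring.
      rewrite Rabs_mult, (Rabs_pos_eq (k * V)) by lra. apply Rmult_le_compat_l. lra. apply cos_lip. }
    assert (e4 : Rabs (V * sin b / cl a - V * sin b' / cl a') <= V / rm * Rabs (b - b') + V / rm^2 * Rabs (a - a')).
    { replace (V * sin b / cl a - V * sin b' / cl a') with (V * ((sin b - sin b') * / cl a) + V * (sin b' * (/ cl a - / cl a'))) by (field; lra).
      eapply Rle_trans. apply Rabs_triang. rewrite !Rabs_mult, (Rabs_pos_eq V) by lra.
      rewrite (Rabs_pos_eq (/ cl a)) by (apply Rlt_le, Rinv_0_lt_compat; lra).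
      assert (/ cl a <= / rm) by (apply Rinv_le_contravar; lra).
      assert (0 < / cl a) by (apply Rinv_0_lt_compat; lra).
      assert (Rabs (sin b') <= 1) by (apply Rabs_le; apply SIN_bound).
      assert (i := inv_lip rm (cl a) (cl a') hrm0 ltac:(lra) ltac:(lra)).
      assert (s := sin_lip b b').
      assert (t1 : Rabs (sin b - sin b') * / cl a <= Rabs (b - b') * / rm) by (apply Rmult_le_compat; auto using Rabs_pos; lra).
      assert (t2 : Rabs (sin b') * Rabs (/ cl a - / cl a') <= 1 * (Rabs (a - a') / rm ^ 2)).
      { apply Rmult_le_compat; auto using Rabs_pos. eapply Rle_trans. apply i.
        unfold Rdiv. apply Rmult_le_compat_r. apply Rlt_le, Rinv_0_lt_compat, pow_lt; lra. lra. }
      unfold Rdiv. 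
      assert (V * (Rabs (sin b - sin b') * / cl a) <= V * (Rabs (b - b') * / rm)) by (apply Rmult_le_compat_l; lra).
      assert (V * (Rabs (sin b') * Rabs (/ cl a - / cl a')) <= V * (1 * (Rabs (a - a') / rm ^ 2))) by (apply Rmult_le_compat_l; lra).
      unfold Rdiv in *. lra. }
    assert (E : - k * V * sqrt (1 - (ra / cl a) ^ 2) + k * V * cos b + V * sin b / cl a -
      (- k * V * sqrt (1 - (ra / cl a') ^ 2) + k * V * cos b' + V * sin b' / cl a') =
      (- k * V * sqrt (1 - (ra / cl a)^2) + k * V * sqrt (1 - (ra / cl a')^2)) + (k * V * cos b - k * V * cos b')
      + (V * sin b / cl a - V * sin b' / cl a')) by ring.
    rewrite E.
    assert (T3 := tri3b ((- k * V * sqrt (1 - (ra / cl a)^2) + k * V * sqrt (1 - (ra / cl a')^2)) + (k * V * cos b - k * V * cos b')) (V * sin b / cl a - V * sin b' / cl a') 0).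
    assert (hA := Rabs_pos (a - a')). assert (hB := Rabs_pos (b - b')).
    assert (T2 := Rabs_triang (- k * V * sqrt (1 - (ra / cl a)^2) + k * V * sqrt (1 - (ra / cl a')^2)) (k * V * cos b - k * V * cos b')).
    rewrite Rminus_0_r, Rabs_R0, Rplus_0_r in T3.
    assert (Hfin : V * Rabs (b - b') + (k * V * L1 * Rabs (a - a') + k * V * Rabs (b - b') + (V / rm * Rabs (b - b') + V / rm ^ 2 * Rabs (a - a')))
       <= (V + k * V + V / rm + k * V * L1 + V / rm ^ 2) * (Rabs (a - a') + Rabs (b - b'))).
    { assert (0 <= V * Rabs (a - a')) by nra. assert (0 <= k * V * Rabs (a - a')) by nra.
      assert (0 <= V / rm * Rabs (a - a')) by nra. assert (0 <= k * V * L1 * Rabs (b - b')) by nra.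
      assert (0 <= V / rm^2 * Rabs (b - b')) by nra. nra. }
    lra.
Qed.


Lemma cont_right (f : R -> R) : continuous f 0 -> filterlim f (at_right 0) (locally (f 0)).
Proof.
  intros Hc. apply filterlim_locally. intros eps.
  destruct (cont_eps f 0 Hc eps (cond_pos eps)) as [d [Hd H]].
  exists (mkposreal d Hd). intros y Hy _. apply H. exact Hy.
Qed.

Lemma sqrt_lt_sq a d : 0 < d -> sqrt a < d -> a < d^2.
Proof.
  intros hd h. destruct (Rle_dec a 0). assert (0 < d^2) by (apply pow_lt; lra). lra.
  rewrite <- (pow2_sqrt a) by lra. assert (0 <= sqrt a) by apply sqrt_pos.
  simpl. rewrite !Rmult_1_r. apply Rmult_le_0_lt_compat; lra.
Qed.

Theorem theorem2 (V rd k : R) (hV : 0 < V) (hrd : 0 < rd) (hk : 1 / rd < k) :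
  locally_exp_stable V k (r_a rd k) rd (PI / 2).
Proof.
  destruct (params rd k hrd hk) as [hk0 [hkr [hra [hrad [hra2 hsq]]]]].
  set (ra := r_a rd k) in *.
  assert (hk2 : 0 < k^2) by (apply pow_lt; lra).
  assert (hk3 : 0 < k^3) by (apply pow_lt; lra).
  set (eta := etaV V k).
  assert (heta : 0 < eta).
  { unfold eta, etaV. apply Rdiv_lt_0_compat. apply Rmult_lt_0_compat; auto.
    apply Rdiv_lt_0_compat; lra. nra. }
  destruct (lin_err sin 0 (cos 0) (derivable_pt_lim_sin 0) (eta / (3 * V * (k+1)))) as [ds [hds Hds]].
  { apply Rdiv_lt_0_compat; nra. }
  destruct (lin_err cos 0 (- sin 0) (derivable_pt_lim_cos 0) (eta * rd / (6 * V))) as [dc [hdc Hdc]].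
  { apply Rdiv_lt_0_compat; nra. }
  destruct (lin_err _ 0 _ (hfun_der V rd k hrd hk) (eta / 3)) as [dh [hdh Hdh]].
  { lra. }
  set (rho := Rmin (Rmin (rd / 2) ((rd - ra) / 2)) (Rmin (ds / 2) (Rmin (dc / 2) (dh / 2)))).
  assert (hrho1 : rho <= rd / 2).
  { unfold rho. eapply Rle_trans. apply Rmin_l. apply Rmin_l. }
  assert (hrho2 : rho <= (rd - ra) / 2).
  { unfold rho. eapply Rle_trans. apply Rmin_l. apply Rmin_r. }
  assert (hrho3 : rho <= ds / 2).
  { unfold rho. eapply Rle_trans. apply Rmin_r. apply Rmin_l. }
  assert (hrho4 : rho <= dc / 2).
  { unfold rho. eapply Rle_trans. apply Rmin_r. eapply Rle_trans. apply Rmin_r. apply Rmin_l. }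
  assert (hrho5 : rho <= dh / 2).
  { unfold rho. eapply Rle_trans. apply Rmin_r. eapply Rle_trans. apply Rmin_r. apply Rmin_r. }
  assert (hrho : 0 < rho).
  { unfold rho. repeat apply Rmin_glb_lt; lra. }
  assert (HS : forall h, Rabs h <= rho -> Rabs (sin h - h) <= etaV V k / (3 * V * (k+1)) * Rabs h).
  { intros h Hh. specialize (Hds h ltac:(lra)). rewrite Rplus_0_l, sin_0, cos_0 in Hds.
    replace (sin h - h) with (sin h - 0 - 1 * h) by ring. exact Hds. }
  assert (HC : forall h, Rabs h <= rho -> Rabs (cos h - 1) <= etaV V k * rd / (6 * V) * Rabs h).
  { intros h Hh. specialize (Hdc h ltac:(lra)). rewrite Rplus_0_l, sin_0, cos_0 in Hdc.
    replace (cos h - 1) with (cos h - 1 - - 0 * h) by ring. exact Hdc. }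
  assert (hf0 : hfun V k ra rd 0 = 0).
  { unfold hfun. rewrite Rplus_0_r. fold ra in hsq. rewrite hsq. field. lra. }
  assert (HH : forall h, Rabs h <= rho -> Rabs (hfun V k ra rd h + k^2 * V * h) <= etaV V k / 3 * Rabs h).
  { intros h Hh. specialize (Hdh h ltac:(lra)). fold ra in Hdh. rewrite Rplus_0_l, hf0 in Hdh.
    replace (hfun V k ra rd h + k^2 * V * h) with (hfun V k ra rd h - 0 - - k^2 * V * h) by ring. exact Hdh. }
  set (mu := muV V k).
  assert (hmu : 0 < mu).
  { unfold mu, muV. apply Rdiv_lt_0_compat. apply Rmult_lt_0_compat; auto.
    apply Rdiv_lt_0_compat; lra. nra. }
  set (Lam := 2 * k^2 + 2).
  set (lam := k^2 / Lam).
  assert (hLam : 0 < Lam) by (unfold Lam; lra).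
  assert (hlam : 0 < lam) by (unfold lam; apply Rdiv_lt_0_compat; lra).
  assert (hlam1 : lam <= k^2).
  { unfold lam. apply Rmult_le_reg_r with Lam; auto. unfold Rdiv. rewrite Rmult_assoc, Rinv_l by lra.
    unfold Lam. nra. }
  assert (hlam2 : lam <= 1/2).
  { unfold lam. apply Rmult_le_reg_r with Lam; auto. unfold Rdiv. rewrite Rmult_assoc, Rinv_l by lra.
    unfold Lam. lra. }
  assert (Hlam : forall r th, lam * ((r - rd)^2 + (th - PI/2)^2) <= Wf rd (PI/2) (3 * k^2 / 2) k r th).
  { intros r th. unfold Wf. set (x := r - rd). set (y := th - PI/2).
    assert (0 <= (k*x + y)^2) by apply pow2_ge_0.
    assert (0 <= x^2) by apply pow2_ge_0. assert (0 <= y^2) by apply pow2_ge_0.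
    assert (lam * x^2 <= k^2 * x^2) by (apply Rmult_le_compat_r; lra).
    assert (lam * y^2 <= 1/2 * y^2) by (apply Rmult_le_compat_r; lra).
    nra. }
  assert (HLam : forall r th, Wf rd (PI/2) (3 * k^2 / 2) k r th <= Lam * ((r - rd)^2 + (th - PI/2)^2)).
  { intros r th. unfold Wf, Lam. set (x := r - rd). set (y := th - PI/2).
    assert (0 <= (k*x - y)^2) by apply pow2_ge_0.
    assert (0 <= x^2) by apply pow2_ge_0. assert (0 <= y^2) by apply pow2_ge_0. nra. }
  assert (Hdec : forall r th, Rabs (r - rd) <= rho -> Rabs (th - PI/2) <= rho ->
     (2*(3 * k^2 / 2)*(r - rd) + k*(th - PI/2)) * f_r V r th + (k*(r - rd) + 2*(th - PI/2)) * f_th V k ra r th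
       + mu * Wf rd (PI/2) (3 * k^2 / 2) k r th <= 0).
  { intros r th Hx Hy. unfold mu, Wf.
    apply (Hdec_conc V rd k rho r th); auto. }
  assert (LY := lyap rd (PI/2) (3 * k^2 / 2) k mu lam rho (f_r V) (f_th V k ra) hmu hlam hrho Hlam Hdec).
  assert (WR := W_rect rd (PI/2) (3 * k^2 / 2) k lam rho hlam hrho Hlam).
  split; [|split].
  - unfold f_r. rewrite cos_PI2. ring.
  - rewrite fth_form by lra. fold ra in hsq. rewrite hsq, cos_PI2, sin_PI2. field. lra.
  - set (m0 := lam / (Lam + 1)).
    assert (hm0 : 0 < m0) by (unfold m0; apply Rdiv_lt_0_compat; lra).
    assert (hm0a : m0 * Lam <= lam).
    { unfold m0. apply Rmult_le_reg_r with (Lam + 1). lra.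
      replace (lam / (Lam + 1) * Lam * (Lam + 1)) with (lam * Lam) by (field; lra). nra. }
    assert (hm0b : m0 <= 1).
    { unfold m0. apply Rmult_le_reg_r with (Lam + 1). lra.
      replace (lam / (Lam + 1) * (Lam + 1)) with lam by (field; lra). lra. }
    set (delta := rho * m0 / 2).
    assert (hdelta : 0 < delta) by (unfold delta; nra).
    assert (Hdel : Lam * delta^2 < lam * rho^2).
    { unfold delta. replace (Lam * (rho * m0 / 2)^2) with ((m0 * Lam) * m0 * rho^2 / 4) by field.
      assert (0 < rho^2) by (apply pow_lt; lra).
      assert (m0 * Lam * m0 <= lam * 1) by (apply Rmult_le_compat; nra). nra. }
    exists delta, (sqrt (Lam / lam)), (mu / 2).
    split; [exact hdelta|]. split. apply sqrt_lt_R0, Rdiv_lt_0_compat; lra. split. lra.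
    intros r0 th0 Hd.
    set (D0 := (r0 - rd)^2 + (th0 - PI/2)^2).
    assert (HD0 : D0 < delta^2) by (apply sqrt_lt_sq; auto).
    assert (HD0p : 0 <= D0) by (unfold D0; apply Rplus_le_le_0_compat; apply pow2_ge_0).
    assert (HW0 : Wf rd (PI/2) (3 * k^2 / 2) k r0 th0 < lam * rho^2).
    { eapply Rle_lt_trans. apply HLam. fold D0. eapply Rle_lt_trans; [|exact Hdel].
      apply Rmult_le_compat_l; lra. }
    assert (BND : forall (T : Rbar) (r th : R -> R) (F1 F2 : R -> R -> R),
      (forall a b, Rabs (a - rd) <= rho -> Rabs (b - PI/2) <= rho -> F1 a b = f_r V a b /\ F2 a b = f_th V k ra a b) ->
      (forall t, 0 < t -> Rbar_lt t T -> is_derive r t (F1 (r t) (th t)) /\ is_derive th t (F2 (r t) (th t))) ->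
      filterlim r (at_right 0) (locally (r 0)) ->
      filterlim th (at_right 0) (locally (th 0)) ->
      r 0 = r0 -> th 0 = th0 ->
      forall t, 0 <= t -> Rbar_lt t T ->
        Rabs (r t - rd) <= rho /\ Rabs (th t - PI/2) <= rho /\ dist2 (r t) (th t) rd (PI/2) <= sqrt (Lam / lam) * dist2 r0 th0 rd (PI/2) * exp (- (mu/2) * t)).
    { intros T r th F1 F2 Hag Hder Hr Hth Hr0 Hth0 t Ht HtT.
      assert (HW0' : Wf rd (PI/2) (3 * k^2 / 2) k (r 0) (th 0) < lam * rho^2) by (rewrite Hr0, Hth0; auto).
      assert (L := LY F1 F2 T r th Hag Hder Hr Hth HW0' t Ht HtT).
      rewrite Hr0, Hth0 in L.
      assert (He : exp (- mu * t) <= 1).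
      { rewrite <- exp_0. destruct (Req_dec t 0) as [Ht0|Ht0]. rewrite Ht0, Rmult_0_r. lra.
        apply Rlt_le, exp_increasing. nra. }
      assert (HW0p : 0 <= Wf rd (PI/2) (3 * k^2 / 2) k r0 th0).
      { eapply Rle_trans; [|apply Hlam]. apply Rmult_le_pos. lra. apply Rplus_le_le_0_compat; apply pow2_ge_0. }
      assert (HWt : Wf rd (PI/2) (3 * k^2 / 2) k (r t) (th t) < lam * rho^2).
      { assert (Wf rd (PI/2) (3 * k^2 / 2) k r0 th0 * exp (- mu * t) <= Wf rd (PI/2) (3 * k^2 / 2) k r0 th0 * 1)
          by (apply Rmult_le_compat_l; lra). lra. }
      destruct (WR _ _ HWt) as [Hx Hy].
      split; [exact Hx|split; [exact Hy|]].
      set (Dt := (r t - rd)^2 + (th t - PI/2)^2).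
      assert (HDt : 0 <= Dt) by (unfold Dt; apply Rplus_le_le_0_compat; apply pow2_ge_0).
      assert (Hep : 0 < exp (- mu * t)) by apply exp_pos.
      assert (HDtb : Dt <= Lam / lam * D0 * exp (- mu * t)).
      { apply Rmult_le_reg_l with lam; auto.
        replace (lam * (Lam / lam * D0 * exp (- mu * t))) with (Lam * D0 * exp (- mu * t)) by (field; lra).
        eapply Rle_trans. apply Hlam. fold Dt. eapply Rle_trans. apply L.
        apply Rmult_le_compat_r. lra. apply HLam. }
      unfold dist2. fold Dt. fold D0.
      assert (Eexp : exp (- mu * t) = (exp (- (mu / 2) * t))^2).
      { simpl. rewrite Rmult_1_r, <- exp_plus. f_equal. field. }
      apply Rle_trans with (sqrt (Lam / lam * D0 * exp (- mu * t))).
      apply sqrt_le_1; auto. apply Rmult_le_pos; [apply Rmult_le_pos|]; try lra. apply Rlt_le, Rdiv_lt_0_compat; lra.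
      rewrite sqrt_mult, sqrt_mult, Eexp, sqrt_pow2. lra.
      apply Rlt_le, exp_pos. apply Rlt_le, Rdiv_lt_0_compat; lra. lra.
      apply Rmult_le_pos. apply Rlt_le, Rdiv_lt_0_compat; lra. lra. lra. }
    split.
    + destruct (modfield V rd k rho hV hrd hk hrho hrho1 hrho2) as [B [L [hB [hL [HB1 [HB2 HL]]]]]].
      fold ra in HB2, HL.
      destruct (picard_exists (f_r V) (fun a b => f_th V k ra (clamp (rd - rho) (rd + rho) a) b) B L r0 th0 hB hL HB1 HB2 HL)
        as [X [Y [HX0 [HY0 [HXc [HYc HXd]]]]]].
      assert (Hag : forall a b, Rabs (a - rd) <= rho -> Rabs (b - PI/2) <= rho ->
          f_r V a b = f_r V a b /\ f_th V k ra (clamp (rd - rho) (rd + rho) a) b = f_th V k ra a b).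
      { intros a b Ha Hb. split; auto. rewrite clamp_id; auto. apply abs_le in Ha. lra. }
      assert (HXr := cont_right X (HXc 0)). assert (HYr := cont_right Y (HYc 0)).
      exists X, Y. split; [|split; auto].
      split; [|split; auto].
      intros t Ht _.
      destruct (BND p_infty X Y _ _ Hag (fun t Ht _ => HXd t Ht) HXr HYr HX0 HY0 t ltac:(lra) I) as [Hx _].
      destruct (HXd t Ht) as [D1 D2]. split; auto.
      rewrite clamp_id in D2; auto. apply abs_le in Hx. lra.
    + intros T r th [Hder [Hr Hth]] Hr0 Hth0 t Ht HtT.
      refine (proj2 (proj2 (BND T r th (f_r V) (f_th V k ra) _ Hder Hr Hth Hr0 Hth0 t Ht HtT))).
      intros; split; auto.
Qed.
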